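(* Let $G=(V,E)$ be a finite, simple, connected graph with $\kappa(x,y)\geq K>0$ for all $x\sim y$, and suppose $\operatorname{diam}_{\operatorname{eff}}(G)=\frac{\max_v\operatorname{Deg}(v)}{K}$. Let $x\in V$. Then \[ \Delta d(x,\cdot)=\operatorname{Deg}(x)-K\,d(x,\cdot). \] Moreover, $\operatorname{Deg}(v)=\max_w\operatorname{Deg}(w)$ for all $v\in V$, and $\kappa(u,v)=K$ for all edges $u\sim v$.
   Context: $d$ is the combinatorial distance, $\operatorname{Deg}$ the degree, $\operatorname{diam}_{\operatorname{eff}}(G)=\frac{1}{|V|^2}\sum_{x,y}d(x,y)$. Laplacian $\Delta f(x)=\sum_{y\sim x}(f(y)-f(x))$. Ollivier curvature of an edge: $\kappa(x,y)=\inf\{\Delta f(x)-\Delta f(y): f(y)-f(x)=1,\ \max_{u\sim v}|f(u)-f(v)|=1\}$. *)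

(* Defs.v *)
From mathcomp Require Import all_boot all_order all_algebra.
From mathcomp Require Import boolp classical_sets reals.
Set Implicit Arguments. Unset Strict Implicit. Unset Printing Implicit Defensive.
Import Order.TTheory GRing.Theory Num.Theory.
Local Open Scope ring_scope.

Section Graph.
Variables (T : finType) (e : rel T).

Definition simple_graph : Prop := symmetric e /\ irreflexive e.
Definition connected_graph : Prop := forall x y : T, connect e x y.

Fixpoint ball (x : T) (n : nat) : {set T} :=
  if n is n'.+1 then
    ball x n' :|: [set v | [exists u in ball x n', e u v]]
  else [set x].

(* combinatorial distance: least n with y in ball x n
   (any path length < #|T| suffices in a connected graph) *)
Definition dist (x y : T) : nat :=
  find (fun n => y \in ball x n) (iota 0 #|T|).

Definition Deg (v : T) : nat := #|[set w | e v w]|.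
Definition maxDeg : nat := \max_(v : T) Deg v.

Variable R : realType.

Definition diam_eff : R :=
  (#|T| ^ 2)%:R^-1 * \sum_(x : T) \sum_(y : T) (dist x y)%:R.

Definition Laplacian (f : T -> R) (x : T) : R :=
  \sum_(y : T | e x y) (f y - f x).

Definition edge_lip (f : T -> R) : R :=
  \big[Num.max/0]_(p : T * T | e p.1 p.2) `|f p.1 - f p.2|.

(* Ollivier curvature of an edge (limit-free formulation) *)
Definition ollivier (x y : T) : R :=
  inf [set Laplacian f x - Laplacian f y |
        f in [set f : T -> R | f y - f x = 1 /\ edge_lip f = 1]].

End Graph.

(* Main.v *)
Require Import Defs.
From mathcomp Require Import all_boot all_order all_algebra.
From mathcomp Require Import boolp classical_sets reals.
From mathcomp Require Import ring lra.
Import Order.TTheory GRing.Theory Num.Theory.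
Local Open Scope ring_scope.
Set Implicit Arguments. Unset Strict Implicit.
Section S.
Variables (T : finType) (e : rel T).
Hypothesis conn : connected_graph e.

Lemma ball_mono x m n : (m <= n)%N -> ball e x m \subset ball e x n.
Proof.
elim: n => [|n IH]; first by rewrite leqn0 => /eqP ->.
rewrite leq_eqVlt => /orP[/eqP -> //|Hmn].
rewrite ltnS in Hmn; apply/fintype.subsetP => z Hz; rewrite /= inE (fintype.subsetP (IH Hmn)) //.
Qed.

Lemma ball_path x p : path e x p -> last x p \in ball e x (size p).
Proof.
elim/last_ind: p => [|p z IH]; first by rewrite /= set11.
rewrite rcons_path last_rcons size_rcons => /andP[/IH Hp Hz] /=.
apply/setUP; right; rewrite inE; apply/existsP; exists (last x p).
by rewrite Hp.
Qed.

Lemma reach x y : y \in ball e x (#|T|.-1).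
Proof.
have /connectP [p Hp ->] := conn x y.
case: (shortenP Hp) => p' Hp' Hu _.
have Hs : (size p' <= #|T|.-1)%N.
  have := card_uniqP Hu; rewrite /= => Hc.
  have := max_card (mem (x :: p')). rewrite Hc /=. 
  by case: #|T| => //.
exact: (fintype.subsetP (ball_mono x Hs)) _ (ball_path Hp').
Qed.

Lemma mem_ball x y m : (y \in ball e x m) = (dist e x y <= m)%N.
Proof.
have HT : (0 < #|T|)%N by apply/card_gt0P; exists x.
have Hhas : has (fun n => y \in ball e x n) (iota 0 #|T|).
  apply/hasP; exists #|T|.-1; last exact: reach.
  by rewrite mem_iota leq0n add0n ltn_predL.
have Hlt : (dist e x y < #|T|)%N by move: Hhas; rewrite has_find size_iota.
have Hin : y \in ball e x (dist e x y).
  by have := nth_find 0 Hhas; rewrite nth_iota ?add0n.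
apply/idP/idP => H.
  rewrite leqNgt; apply/negP => Hm.
  have := before_find 0 Hm; rewrite nth_iota ?add0n ?H //.
  exact: ltn_trans Hm Hlt.
exact: (fintype.subsetP (ball_mono x H)).
Qed.

Lemma dist_xx x : dist e x x = 0%N.
Proof. by apply/eqP; rewrite -leqn0 -mem_ball /= set11. Qed.

Lemma dist_edge x u v : e u v -> (dist e x v <= (dist e x u).+1)%N.
Proof.
move=> Huv; rewrite -mem_ball /=; apply/setUP; right; rewrite inE.
by apply/existsP; exists u; rewrite Huv mem_ball leqnn.
Qed.

Lemma dist_pred x v d : dist e x v = d.+1 -> exists2 u, e u v & dist e x u = d.
Proof.
move=> Hd; have : v \in ball e x d.+1 by rewrite mem_ball Hd.
rewrite /= => /setUP [|]; first by rewrite mem_ball Hd ltnn.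
rewrite inE => /existsP [u /andP[Hu Huv]]; exists u => //.
move: Hu; rewrite mem_ball => Hu; apply/eqP; rewrite eqn_leq Hu /=.
by have := dist_edge x Huv; rewrite Hd ltnS.
Qed.

Lemma dist0 x y : dist e x y = 0%N -> y = x.
Proof.
move=> H; have : y \in ball e x 0 by rewrite mem_ball H.
by rewrite /= inE => /eqP.
Qed.

Variable R : realType.

Lemma edge_lip_ge (f : T -> R) u v : e u v -> `|f u - f v| <= edge_lip e f.
Proof.
move=> Huv; rewrite /edge_lip (bigD1 (u, v)) //=.
by rewrite le_max lexx.
Qed.

Lemma edge_lip_le (f : T -> R) c : 0 <= c ->
  (forall u v, e u v -> `|f u - f v| <= c) -> edge_lip e f <= c.
Proof.
move=> Hc H; rewrite /edge_lip; elim/big_ind: _ => //.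
  by move=> a b Ha Hb; rewrite ge_max Ha Hb.
by move=> [u v] /= Huv; apply: H.
Qed.

Lemma lap_bound (f : T -> R) v : edge_lip e f = 1 -> `|Laplacian e f v| <= #|T|%:R.
Proof.
move=> Hl; rewrite /Laplacian; apply: le_trans (ler_norm_sum _ _ _) _.
apply: (@le_trans _ _ (\sum_(y : T | e v y) 1)).
  apply: ler_sum => y Hy; rewrite -Hl distrC; exact: edge_lip_ge.
apply: (@le_trans _ _ (\sum_(y : T) 1)).
  rewrite [X in _ <= X](bigID (fun y => e v y)) /= lerDl.
  by apply: sumr_ge0 => *; rewrite ler01.
by rewrite sumr_const.  
Qed.

Lemma lap_sum0 (f : T -> R) : symmetric e -> \sum_v Laplacian e f v = 0.
Proof.
move=> Hs; rewrite /Laplacian.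
pose g v y := if e v y then f y - f v else 0.
have -> : \sum_v \sum_(y | e v y) (f y - f v) = \sum_v \sum_y g v y.
  by apply: eq_bigr => v _; rewrite big_mkcond.
set S := \sum_v _.
have HS : S = - S.
  rewrite {1}/S exchange_big /S -sumrN; apply: eq_bigr => y _.
  rewrite -sumrN; apply: eq_bigr => v _; rewrite /g Hs.
  by case: (e y v); rewrite ?oppr0 // opprB.
have : S *+ 2 = 0 by rewrite mulr2n {1}HS addNr.
by move/eqP; rewrite mulrn_eq0 /= => /eqP.
Qed.

Lemma ollivier_le u v (f : T -> R) : f v - f u = 1 -> edge_lip e f = 1 ->
  ollivier e R u v <= Laplacian e f u - Laplacian e f v.
Proof.
move=> H1 H2; rewrite /ollivier; apply: ge_inf; last by exists f.
exists (- (#|T|%:R *+ 2)) => z [g [Hg1 Hg2] <-].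
move: (lap_bound u Hg2) (lap_bound v Hg2) => /ler_normlP[Ha1 Ha2] /ler_normlP[Hb1 Hb2].
rewrite mulr2n; lra.
Qed.

Lemma curv_lb (K : R) (Hk : forall u v, e u v -> K <= ollivier e R u v)
  u v (f : T -> R) : e u v -> f v - f u = 1 -> edge_lip e f = 1 ->
  K <= Laplacian e f u - Laplacian e f v.
Proof. move=> Huv H1 H2; exact: le_trans (Hk _ _ Huv) (ollivier_le H1 H2). Qed.


Hypothesis Hs : symmetric e.
Hypothesis Hirr : irreflexive e.

Definition fd x : T -> R := fun w => (dist e x w)%:R.

Lemma dist_lip x u v : e u v -> `|fd x u - fd x v| <= 1.
Proof.
move=> Huv; have H1 := dist_edge x Huv.
have H2 : (dist e x u <= (dist e x v).+1)%N by apply: dist_edge; rewrite Hs.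
have H1' : ((dist e x v)%:R : R) <= (dist e x u)%:R + 1 by rewrite natr1 ler_nat.
have H2' : ((dist e x u)%:R : R) <= (dist e x v)%:R + 1 by rewrite natr1 ler_nat.
rewrite /fd; apply/ler_normlP; split; lra.
Qed.

Lemma edge_lip_fd x u v : e u v -> dist e x v = (dist e x u).+1 ->
  edge_lip e (fd x) = 1.
Proof.
move=> Huv Hd; apply: le_anti; rewrite edge_lip_le ?ler01 //=; last first.
  by move=> *; apply: dist_lip.
have := edge_lip_ge (fd x) Huv; rewrite /fd Hd -natr1 opprD addrA subrr sub0r normrN normr1.
done.
Qed.

Lemma dist1 x y : e x y -> dist e x y = 1%N.
Proof.
move=> Hxy; have := dist_edge x Hxy; rewrite dist_xx.
case Hd: (dist e x y) => [|[|k]] // _.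
by move: (dist0 Hd) Hxy => ->; rewrite Hirr.
Qed.

Lemma lap_x x : Laplacian e (fd x) x = (Deg e x)%:R.
Proof.
rewrite /Laplacian /fd dist_xx.
under eq_bigr => y Hy do rewrite (dist1 Hy) subr0.
rewrite (eq_bigl (fun y => y \in [set w | e x w])); last by move=> y; rewrite inE.
by rewrite sumr_const.
Qed.

Lemma lap_geod (K : R) (Hk : forall u v, e u v -> K <= ollivier e R u v) x n v :
  dist e x v = n -> K * n%:R <= Laplacian e (fd x) x - Laplacian e (fd x) v.
Proof.
elim: n v => [|n IH] v Hv.
  by rewrite (dist0 Hv) subrr mulr0.
have [u Huv Hu] := dist_pred Hv.
have H1 : fd x v - fd x u = 1 by rewrite /fd Hv Hu -natr1 addrAC subrr add0r.
have H2 : edge_lip e (fd x) = 1 by apply: (edge_lip_fd Huv); rewrite Hu Hv.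
have := curv_lb Hk Huv H1 H2; have := IH u Hu.
rewrite -natr1 mulrDr mulr1; lra.
Qed.

End S.

Theorem lemma3p2 (R : realType) (T : finType) (e : rel T) (K : R) :
  simple_graph e -> connected_graph e ->
  0 < K ->
  (forall u v : T, e u v -> K <= ollivier e R u v) ->
  diam_eff e R = (maxDeg e)%:R / K ->
  forall x : T,
    ((forall v : T,
        Laplacian e (fun w => ((dist e x w)%:R : R)) v
        = (Deg e x)%:R - K * (dist e x v)%:R)
     /\ (forall v : T, Deg e v = maxDeg e)
     /\ (forall u v : T, e u v -> ollivier e R u v = K)).
Proof.
move=> [Hs Hirr] Hconn HK Hk Hdiam x.
set N : R := #|T|%:R; set D : R := (maxDeg e)%:R.
have HN : 0 < N by rewrite /N ltr0n; apply/card_gt0P; exists x.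
have HK0 : K != 0 by rewrite gt_eqF.
have Hsum : \sum_a \sum_b ((dist e a b)%:R : R) = N ^+ 2 * (D / K).
  rewrite -Hdiam /diam_eff natrX -/N mulrA mulfV ?mul1r //.
  by rewrite expf_neq0 // gt_eqF.
pose h a b := D - K * (dist e a b)%:R - Laplacian e (fd e R a) b.
have Hh : forall a b, 0 <= h a b.
  move=> a b; have := lap_geod Hconn Hs Hk (erefl (dist e a b)).
  rewrite (lap_x Hconn R Hirr) /h.
  have : ((Deg e a)%:R : R) <= D by rewrite /D ler_nat /maxDeg (leq_bigmax a).
  rewrite /fd; lra.
have Hs0 : \sum_a \sum_b h a b = 0.
  rewrite /h.
  have -> : \sum_a \sum_b (D - K * (dist e a b)%:R - Laplacian e (fd e R a) b)
     = \sum_a (N * D - K * \sum_b ((dist e a b)%:R : R)).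
    apply: eq_bigr => a _; rewrite !sumrB (lap_sum0 _ Hs) subr0 -mulr_sumr.
    by rewrite sumr_const -mulr_natr mulrC.
  rewrite sumrB sumr_const -mulr_natr -mulr_sumr Hsum.
  have -> : (#|(xpredT : pred T)|%:R : R) = N by [].
  by field.
have Hz : forall a b, h a b = 0.
  move=> a b.
  move: (psumr_eq0P (P := xpredT) (F := fun a => \sum_b h a b)).
  move=> /(_ (fun i _ => sumr_ge0 _ (fun j _ => Hh i j)) Hs0 a isT) Ha.
  exact: (psumr_eq0P (P := xpredT) (fun j _ => Hh a j) Ha).
have HD : forall v, ((Deg e v)%:R : R) = D.
  move=> v; have := Hz v v; rewrite /h (lap_x Hconn R Hirr) (dist_xx Hconn).
  move=> ?; lra.
have H1 : forall a v, Laplacian e (fun w => ((dist e a w)%:R : R)) v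
        = (Deg e a)%:R - K * (dist e a v)%:R.
  move=> a v; have := Hz a v; rewrite /h HD; move/eqP; rewrite subr_eq0 => /eqP.
  by rewrite /fd => <-.
split; first exact: H1.
split.
  by move=> v; apply/eqP; rewrite -(eqr_nat R) HD.
move=> u v Huv; apply: le_anti; rewrite Hk // andbT.
have Hd1 := dist1 Hconn Hirr Huv.
have := @ollivier_le T e R u v (fd e R u).
rewrite /fd Hd1 (dist_xx Hconn) subr0 => /(_ erefl).
rewrite -/(fd e R u) (edge_lip_fd Hconn R Hs Huv); last by rewrite Hd1 (dist_xx Hconn).
move=> /(_ erefl); rewrite /fd !H1 Hd1 (dist_xx Hconn) mulr0 subr0 mulr1.
by rewrite opprB addrC subrK.
Qed.
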